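(* Let $m_1,\dots,m_r,n$ be positive integers with $m=\sum_{i=1}^r m_i\le n$. Suppose that $\sum_{i=1}^r\lfloor m_i n/(m+1)\rfloor<\lfloor mn/(m+1)\rfloor$, or that there is some $i\in[r]$ with $m_i n/(m+1)<\lceil m_i n/(m+2)\rceil$. Then $(m+1)\nmid n$, and neither $K_{m_1 n,\dots,m_r n}$ nor $K_{m_1,\dots,m_r}\times K_n$ is equitably $\lfloor mn/(m+1)\rfloor$-colorable.
   Context: A (proper) $k$-coloring of a graph $G$ is a map $f:V(G)\to\{1,\dots,k\}$ with $f(x)\ne f(y)$ whenever $xy\in E(G)$; an equitable $k$-coloring is a $k$-coloring in which any two color classes differ in size by at most $1$; $G$ is equitably $k$-colorable if it has one. $K_{a_1,\dots,a_r}$ denotes the complete multipartite graph with parts of sizes $a_1,\dots,a_r$; $K_n$ is the complete graph on $n$ vertices. The Kronecker product $G\times H$ has vertex set $V(G)\times V(H)$, with $(x,y)$ adjacent to $(x',y')$ iff $xx'\in E(G)$ and $yy'\in E(H)$. $[r]=\{1,\dots,r\}$. *)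

(* Defs.v *)
From mathcomp Require Import all_boot all_order.
Set Implicit Arguments. Unset Strict Implicit. Unset Printing Implicit Defensive.

Definition proper_coloring (V : finType) (e : rel V) (k : nat) (f : V -> 'I_k) : Prop :=
  forall x y : V, e x y -> f x != f y.

Definition equitable_coloring (V : finType) (e : rel V) (k : nat) (f : V -> 'I_k) : Prop :=
  proper_coloring e f /\
  forall c c' : 'I_k, #|[pred x | f x == c]| <= #|[pred x | f x == c']| + 1.

Definition equitably_colorable (V : finType) (e : rel V) (k : nat) : Prop :=
  exists f : V -> 'I_k, equitable_coloring e f.

(* Complete multipartite graph K_{a_1,...,a_r}: vertices are pairs (i, j) with
   j < a i (part i has a i vertices); adjacent iff in different parts. *)
Definition multipartite_vertex (r : nat) (a : 'I_r -> nat) : finType :=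
  {i : 'I_r & 'I_(a i)}.
Definition Kmultipartite (r : nat) (a : 'I_r -> nat) : rel (multipartite_vertex a) :=
  fun x y => tag x != tag y.

Definition Kcomplete (n : nat) : rel 'I_n := fun x y => x != y.

Definition kron (V W : finType) (e : rel V) (g : rel W) : rel (V * W)%type :=
  fun p q => e p.1 q.1 && g p.2 q.2.

Definition ceildiv (a b : nat) : nat := (a + b.-1) %/ b.
Arguments Kmultipartite {r} a _ _.
Arguments Kcomplete : clear implicits.

(* Main.v *)
Require Import Defs.
From mathcomp Require Import all_boot all_order.
From mathcomp Require Import zify.

Lemma arith k m n r : m * n = k * m.+1 + r -> r < m.+1 -> k * m.+2 < m * n -> m <= n -> 0 < k -> 0 < m -> False.
Proof. move=> H1 H2 H3 H4 H5 H6.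
have kr : k < r by nia.
have km : k.+1 = m by nia.
case: (ltngtP n m) => Hn; [lia| nia | subst; nia]. Qed.

Lemma sum_lt (I : finType) (F G : I -> nat) (i0 : I) :
  (forall i, F i <= G i) -> F i0 < G i0 -> \sum_i F i < \sum_i G i.
Proof.
move=> H H0; rewrite (bigD1 i0) //= [X in _ < X](bigD1 i0) //=.
rewrite -addSn leq_add //; apply: leq_sum => i _; exact: H.
Qed.

Lemma card_part (V : finType) r (p : V -> 'I_r) :
  #|V| = \sum_i #|[pred x | p x == i]|.
Proof.
rewrite -sum1_card (partition_big p predT) //=; apply: eq_bigr => i _.
by rewrite -sum1_card.
Qed.

Lemma sum_const_pred (I : finType) (P : pred I) a :
  \sum_(c | P c) a = (\sum_(c | P c) 1) * a.
Proof. by rewrite big_distrl /=; apply: eq_bigr => c _; rewrite mul1n. Qed.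

Lemma core (V : finType) (r : nat) (mi : 'I_r -> nat) (n : nat) (p : V -> 'I_r)
  (k : nat) (f : V -> 'I_k) :
  let m := \sum_(i < r) mi i in
  0 < m -> m <= n -> k = m * n %/ m.+1 ->
  (forall i, #|[pred x | p x == i]| = mi i * n) ->
  (forall c c', #|[pred x | f x == c]| <= #|[pred x | f x == c']| + 1) ->
  ((forall c, m < #|[pred x | f x == c]|) -> forall x y, f x = f y -> p x = p y) ->
  (\sum_(i < r) (mi i * n) %/ m.+1 < k \/
   exists i, mi i * n < m.+1 * ceildiv (mi i * n) m.+2) -> False.
Proof.
move=> m m0 mn kdef Hp Heq Hs Halt.
set w := fun c => #|[pred x | f x == c]|.
have cardV : #|V| = m * n.
  by rewrite (@card_part _ _ p) /m big_distrl /=; apply: eq_bigr => i _; rewrite Hp.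
have cardVw : #|V| = \sum_c w c := @card_part _ _ f.
have : 0 < #|V| by rewrite cardV muln_gt0 m0 (leq_trans m0 mn).
case/card_gt0P => x0 _.
have kpos : 0 < k by apply: leq_ltn_trans (ltn_ord (f x0)).
have km : k * m.+1 <= m * n by rewrite kdef leq_divM.
have wbig : forall c, m < w c.
  move=> c; rewrite ltnNge; apply/negP => Hc.
  have : \sum_c' w c' < \sum_(c' < k) m.+1.
    apply: (@sum_lt _ w (fun _ => m.+1) c) => [c'|]; last by rewrite ltnS.
    have := Heq c' c; rewrite -/(w c') -/(w c); lia.
  rewrite -cardVw cardV sum_nat_const card_ord; lia.
have same := Hs wbig.
pose g c := if [pick x | f x == c] is Some x then p x else p x0.
have gf : forall x, g (f x) = p x.
  move=> x; rewrite /g; case: pickP => [y /eqP fy | /(_ x)]; last by rewrite eqxx.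
  exact: same.
pose ci i := \sum_(c | g c == i) 1.
have part : forall i, mi i * n = \sum_(c | g c == i) w c.
  move=> i; rewrite -Hp -sum1_card (partition_big f (fun c => g c == i)) /=; last first.
    by move=> x; rewrite inE gf.
  apply: eq_bigr => c /eqP gc; rewrite /w -sum1_card; apply: eq_bigl => x.
  rewrite !inE; case: (f x =P c) => [fx|]; last by rewrite andbF.
  by rewrite andbT -gf fx gc eqxx.
have sumci : \sum_i ci i = k.
  rewrite -[RHS]card_ord -sum1_card (partition_big g predT) //=; apply: eq_bigr => i _; apply: eq_bigl => c.
have cilo : forall i, ci i * m.+1 <= mi i * n.
  move=> i; rewrite part /ci -sum_const_pred; apply: leq_sum => c _; exact: wbig.
case: Halt => [H1|[i Hi]].
  have : k <= \sum_i (mi i * n) %/ m.+1.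
    rewrite -sumci; apply: leq_sum => i _; rewrite leq_divRL //; exact: cilo.
  by move=> H2; have := leq_trans H1 H2; rewrite ltnn.
have ci_i : ci i * m.+2 < mi i * n.
  have : ci i < ceildiv (mi i * n) m.+2.
    rewrite -(ltn_pmul2l (ltn0Sn m)); have := cilo i; lia.
  rewrite /ceildiv /= leq_divRL //; lia.
have wbig2 : forall c, m.+1 < w c.
  move=> c; rewrite ltnNge; apply/negP => Hc.
  have : mi i * n <= ci i * m.+2.
    rewrite part /ci -sum_const_pred; apply: leq_sum => c' _.
    have := Heq c' c; rewrite -/(w c') -/(w c); lia.
  lia.
have cilo2 : forall j, ci j * m.+2 <= mi j * n.
  move=> j; rewrite part /ci -sum_const_pred; apply: leq_sum => c _; exact: wbig2.
have := @sum_lt _ (fun j => ci j * m.+2) (fun j => mi j * n) i cilo2 ci_i.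
rewrite -big_distrl /= sumci -big_distrl /= -/m => Hlt.
have := divn_eq (m * n) m.+1; have := ltn_pmod (m * n) (ltn0Sn m).
rewrite -kdef => H1 H2.
exact: (arith _ _ _ _ H2 H1 Hlt mn kpos m0).
Qed.

Lemma card_tag r (a : 'I_r -> nat) i :
  #|[pred x : multipartite_vertex a | tag x == i]| = a i.
Proof.
rewrite -[RHS]card_ord -(@card_image _ _ (@Tagged _ i (fun i => 'I_(a i)))); last first.
  by move=> j1 j2 /(congr1 (tagged_as (Tagged (fun i => 'I_(a i)) j1))); rewrite !tagged_asE.
apply: eq_card => x; rewrite inE; case: x => i' j /=.
apply/eqP/imageP => [e|[y _ e]]; [subst i'; by exists j | exact: (congr1 tag e)].
Qed.

Lemma card_mv r (a : 'I_r -> nat) : #|multipartite_vertex a| = \sum_i a i.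
Proof. rewrite (@card_part _ _ tag); apply: eq_bigr => i _; exact: card_tag. Qed.

Lemma card_kron_tag r (a : 'I_r -> nat) n i :
  #|[pred x : (multipartite_vertex a * 'I_n)%type | tag x.1 == i]| = a i * n.
Proof.
rewrite -(@card_tag _ a i) -[in RHS](card_ord n) -cardX; apply: eq_card => x.
by rewrite !inE andbT.
Qed.

Lemma card_kron_snd r (a : 'I_r -> nat) n t :
  #|[pred x : (multipartite_vertex a * 'I_n)%type | x.2 == t]| = \sum_i a i.
Proof.
rewrite -(@card_mv _ a) -[RHS]muln1 -(card1 t) -cardX; apply: eq_card => x.
by rewrite !inE.
Qed.

Theorem mainTheorem5 (r : nat) (mi : 'I_r -> nat) (n : nat) :
  (forall i, 0 < mi i) -> 0 < n ->
  let m := \sum_(i < r) mi i in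
  m <= n ->
  (\sum_(i < r) (mi i * n) %/ m.+1 < (m * n) %/ m.+1 \/
   exists i : 'I_r, mi i * n < m.+1 * ceildiv (mi i * n) m.+2) ->
  ~~ (m.+1 %| n) /\
  ~ equitably_colorable (Kmultipartite (fun i => mi i * n)) ((m * n) %/ m.+1) /\
  ~ equitably_colorable (kron (Kmultipartite mi) (Kcomplete n)) ((m * n) %/ m.+1).
Proof.
move=> Hmi n0 m mn Halt.
have m0 : 0 < m.
  case: Halt => [H|[i _]].
    rewrite lt0n; apply/eqP => me; move: H; rewrite me mul0n div0n.
    by case: (\sum_(i < r) _).
  by rewrite /m (bigD1 i) //=; apply: leq_trans (Hmi i) (leq_addr _ _).
split.
  apply/negP => /dvdnP [t ht]; case: Halt => [H|[i Hi]].
    move: H; rewrite ht mulnA mulnK //.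
    under eq_bigr => i _ do rewrite mulnA mulnK //.
    by rewrite -big_distrl /= -/m ltnn.
  have : ceildiv (mi i * n) m.+2 < (mi i * t).+1.
    by rewrite /ceildiv ltn_divLR // ht; nia.
  move: Hi; rewrite ht; nia.
split.
  case=> f [Hprop Heq].
  apply: (@core _ r mi n (fun x => tag x) _ f m0 mn erefl) => //.
    by move=> i; rewrite (@card_tag _ (fun i => mi i * n)).
  move=> _ x y fxy; apply/eqP; apply/negPn/negP => ne.
  by have := Hprop x y ne; rewrite fxy eqxx.
case=> f [Hprop Heq].
apply: (@core _ r mi n (fun x => tag x.1) _ f m0 mn erefl) => //.
  by move=> i; rewrite card_kron_tag.
move=> wbig x y fxy; apply/eqP; apply/negPn/negP => Hne.
have adj : forall z z', f z = f z' -> tag z.1 = tag z'.1 \/ z.2 = z'.2.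
  move=> z z' e; case: (eqVneq (tag z.1) (tag z'.1)) => [->|ne]; [by left|right].
  apply/eqP; apply/negPn/negP => ne2.
  by have := Hprop z z'; rewrite /kron /Kcomplete /Kmultipartite /= ne ne2 e eqxx => /(_ isT).
have xy2 : x.2 = y.2 by case: (adj x y fxy) => // e; rewrite e eqxx in Hne.
have sub : [pred z | f z == f x] \subset [pred z | z.2 == x.2].
  apply/subsetP => z; rewrite !inE => /eqP fz.
  case: (adj z x fz) => [tz|->//]; case: (adj z y (etrans fz fxy)) => [ty|->]; last by rewrite xy2.
  by rewrite -tz ty eqxx in Hne.
have := subset_leq_card sub; rewrite card_kron_snd -/m.
by move=> H; have := leq_trans (wbig (f x)) H; rewrite ltnn.
Qed.
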